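(* Let $(\mathfrak{g},[\cdot,\ldots,\cdot],\varepsilon,\alpha)$ be an $n$-Hom-Lie color algebra. Then $\mathfrak{g}$ admits a strict product structure if and only if $\mathfrak{g}$ admits a decomposition $\mathfrak{g}=\mathfrak{g}_+\oplus\mathfrak{g}_-$ into two nonzero $\Gamma$-graded subalgebras $\mathfrak{g}_+,\mathfrak{g}_-$ such that for every $1\le i\le n-1$, $[a_1,\ldots,a_i,b_{i+1},\ldots,b_n]=0$ for all $a_1,\ldots,a_i\in\mathfrak{g}_+$ and $b_{i+1},\ldots,b_n\in\mathfrak{g}_-$.
   Context: $\mathbb{K}$ is a field of characteristic zero and $\Gamma$ an abelian group. A bicharacter is a map $\varepsilon:\Gamma\times\Gamma\to\mathbb{K}\setminus\{0\}$ with $\varepsilon(a,b)\varepsilon(b,a)=1$, $\varepsilon(a,b+c)=\varepsilon(a,b)\varepsilon(a,c)$, $\varepsilon(a+b,c)=\varepsilon(a,c)\varepsilon(b,c)$. For homogeneous $x,y$, $\varepsilon(x,y)=\varepsilon(|x|,|y|)$ and $\varepsilon(x,y_1+\dots+y_k)=\varepsilon(|x|,|y_1|+\dots+|y_k|)$ ($=1$ for an empty sum). An $n$-Hom-Lie color algebra $(\mathfrak{g},[\cdot,\ldots,\cdot],\varepsilon,\alpha)$ is a $\Gamma$-graded vector space with an $n$-linear bracket of degree zero, a bicharacter $\varepsilon$ and a degree-zero linear map $\alpha$ such that for homogeneous elements: (i) $[x_1,\ldots,x_i,x_{i+1},\ldots,x_n]=-\varepsilon(x_i,x_{i+1})[x_1,\ldots,x_{i+1},x_i,\ldots,x_n]$;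 (ii) $[\alpha(x_1),\ldots,\alpha(x_{n-1}),[y_1,\ldots,y_n]]=\sum_{i=1}^n\varepsilon(x_1+\dots+x_{n-1},y_1+\dots+y_{i-1})[\alpha(y_1),\ldots,\alpha(y_{i-1}),[x_1,\ldots,x_{n-1},y_i],\alpha(y_{i+1}),\ldots,\alpha(y_n)]$. A $\Gamma$-graded subalgebra is a graded subspace $\mathfrak{h}=\bigoplus_\gamma(\mathfrak{h}\cap\mathfrak{g}_\gamma)$ with $\alpha(\mathfrak{h})\subseteq\mathfrak{h}$ and $[\mathfrak{h},\ldots,\mathfrak{h}]\subseteq\mathfrak{h}$. An almost product structure is a degree-zero linear map $\mathcal{P}:\mathfrak{g}\to\mathfrak{g}$ with $\mathcal{P}\neq\pm\mathrm{id}$ and $\mathcal{P}^2=\mathrm{id}$. A degree-zero linear map $\Theta$ is in the centroid if $\Theta\alpha=\alpha\Theta$ and $\Theta([x_1,x_2,\ldots,x_n])=[\Theta x_1,x_2,\ldots,x_n]$ for all $x_i$. A strict product structure is an almost product structure lying in the centroid. *)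

(* Defs.v *)
From HB Require Import structures.
From mathcomp Require Import all_boot all_order all_algebra.
Set Implicit Arguments. Unset Strict Implicit. Unset Printing Implicit Defensive.
Import GRing.Theory.
Local Open Scope ring_scope.

(* Conventions: the n-ary bracket is a function br : ('I_n -> V) -> V,
   argument j : 'I_n is the (j+1)-th slot (0-based indices). *)

Section Defs.
Variables (K : fieldType) (Gam : zmodType) (V : lmodType K).

Definition subspace (S : V -> Prop) : Prop :=
  S 0 /\ (forall x y, S x -> S y -> S (x + y)) /\
  (forall (k : K) x, S x -> S (k *: x)).

Definition grading (G : Gam -> V -> Prop) : Prop :=
  (forall g, subspace (G g)) /\
  (forall x, exists (s : seq Gam) (c : Gam -> V),
      uniq s /\ (forall g, G g (c g)) /\ x = \sum_(g <- s) c g) /\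
  (forall (s : seq Gam) (c : Gam -> V), uniq s -> (forall g, G g (c g)) ->
      \sum_(g <- s) c g = 0 -> forall g, g \in s -> c g = 0).

Definition bicharacter (eps : Gam -> Gam -> K) : Prop :=
  (forall a b, eps a b != 0) /\
  (forall a b, eps a b * eps b a = 1) /\
  (forall a b c, eps a (b + c) = eps a b * eps a c) /\
  (forall a b c, eps (a + b) c = eps a c * eps b c).

Definition klinear (f : V -> V) : Prop :=
  forall (k : K) x y, f (k *: x + y) = k *: f x + f y.

Definition deg0 (G : Gam -> V -> Prop) (f : V -> V) : Prop :=
  klinear f /\ (forall g x, G g x -> G g (f x)).

Definition upd n (f : 'I_n -> V) (i : 'I_n) (v : V) : 'I_n -> V :=
  fun j => if j == i then v else f j.

Definition swapf n (f : 'I_n -> V) (i j : 'I_n) : 'I_n -> V :=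
  fun k => if k == i then f j else if k == j then f i else f k.

Definition nHomLieColor n (G : Gam -> V -> Prop) (br : ('I_n -> V) -> V)
    (eps : Gam -> Gam -> K) (alpha : V -> V) : Prop :=
  grading G /\ bicharacter eps /\ deg0 G alpha /\
  (forall (f : 'I_n -> V) (i : 'I_n), klinear (fun v => br (upd f i v))) /\
  (forall (f : 'I_n -> V) (d : 'I_n -> Gam),
      (forall j, G (d j) (f j)) -> G (\sum_(j < n) d j) (br f)) /\
  (forall (f : 'I_n -> V) (d : 'I_n -> Gam) (i j : 'I_n),
      (forall k, G (d k) (f k)) -> nat_of_ord j = (nat_of_ord i).+1 ->
      br f = - (eps (d i) (d j) *: br (swapf f i j))) /\
  (* (ii) n-Hom-Lie color identity; x_1..x_{n-1} are x 0 .. x (n-2)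
     (the last entry of x is unused) *)
  (forall (x y : 'I_n -> V) (dx dy : 'I_n -> Gam),
      (forall k : 'I_n, (k < n.-1)%N -> G (dx k) (x k)) ->
      (forall k : 'I_n, G (dy k) (y k)) ->
      br (fun j : 'I_n => if (j < n.-1)%N then alpha (x j) else br y) =
      \sum_(i < n)
         eps (\sum_(k < n | (k < n.-1)%N) dx k) (\sum_(k < n | (k < i)%N) dy k) *:
         br (fun j : 'I_n => if j == i
                             then br (fun l : 'I_n => if (l < n.-1)%N then x l else y i)
                             else alpha (y j))).

Definition graded_subalgebra n (G : Gam -> V -> Prop) (br : ('I_n -> V) -> V)
    (alpha : V -> V) (h : V -> Prop) : Prop :=
  subspace h /\
  (forall x, h x -> exists (s : seq Gam) (c : Gam -> V),
      uniq s /\ (forall g, G g (c g) /\ h (c g)) /\ x = \sum_(g <- s) c g) /\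
  (forall x, h x -> h (alpha x)) /\
  (forall f : 'I_n -> V, (forall j, h (f j)) -> h (br f)).

Definition almost_product (G : Gam -> V -> Prop) (P : V -> V) : Prop :=
  deg0 G P /\ ~ (forall x, P x = x) /\ ~ (forall x, P x = - x) /\
  (forall x, P (P x) = x).

Definition centroid n (G : Gam -> V -> Prop) (br : ('I_n -> V) -> V)
    (alpha : V -> V) (T : V -> V) : Prop :=
  deg0 G T /\ (forall x, T (alpha x) = alpha (T x)) /\
  (forall (f : 'I_n -> V) (i0 : 'I_n), nat_of_ord i0 = 0%N ->
      T (br f) = br (upd f i0 (T (f i0)))).

Definition strict_product n G br alpha (P : V -> V) : Prop :=
  almost_product G P /\ @centroid n G br alpha P.

End Defs.

(* Main.v *)
Require Import Defs.
From HB Require Import structures.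
From mathcomp Require Import all_boot all_order all_algebra.
From Stdlib Require Import Classical ClassicalEpsilon FunctionalExtensionality.
Import GRing.Theory.
Local Open Scope ring_scope.
Set Implicit Arguments. Unset Strict Implicit.

Section Basics.
Variables (K : fieldType) (V : lmodType K).

Lemma kl0 (f : V -> V) : klinear f -> f 0 = 0.
Proof.
move=> h; have := h 1 0 0; rewrite !scale1r addr0 => /esym.
by move=> e; apply: (@addrI _ (f 0)); rewrite addr0.
Qed.

Lemma klD (f : V -> V) x y : klinear f -> f (x + y) = f x + f y.
Proof. by move=> h; rewrite -{1}[x]scale1r h scale1r. Qed.

Lemma klZ (f : V -> V) k x : klinear f -> f (k *: x) = k *: f x.
Proof. by move=> h; rewrite -[k *: x]addr0 h kl0 // addr0. Qed.

Lemma klN (f : V -> V) x : klinear f -> f (- x) = - f x.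
Proof. by move=> h; rewrite -scaleN1r klZ // scaleN1r. Qed.

Lemma klB (f : V -> V) x y : klinear f -> f (x - y) = f x - f y.
Proof. by move=> h; rewrite klD // klN. Qed.

Lemma klsum (f : V -> V) (I : Type) (s : seq I) (c : I -> V) :
  klinear f -> f (\sum_(i <- s) c i) = \sum_(i <- s) f (c i).
Proof.
move=> h; elim: s => [|a s IH]; first by rewrite !big_nil kl0.
by rewrite !big_cons klD // IH.
Qed.

Lemma sub0 (S : V -> Prop) : subspace S -> S 0.
Proof. by case. Qed.
Lemma subD (S : V -> Prop) x y : subspace S -> S x -> S y -> S (x + y).
Proof. by case=> _ [h _]; apply: h. Qed.
Lemma subZ (S : V -> Prop) k x : subspace S -> S x -> S (k *: x).
Proof. by case=> _ [_ h]; apply: h. Qed.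
Lemma subN (S : V -> Prop) x : subspace S -> S x -> S (- x).
Proof. by move=> h hx; rewrite -scaleN1r; apply: subZ. Qed.
Lemma subB (S : V -> Prop) x y : subspace S -> S x -> S y -> S (x - y).
Proof. by move=> h hx hy; apply: subD => //; apply: subN. Qed.
Lemma subsum (S : V -> Prop) (I : Type) (s : seq I) (P : pred I) (c : I -> V) :
  subspace S -> (forall i, P i -> S (c i)) -> S (\sum_(i <- s | P i) c i).
Proof.
move=> h hc; apply: big_ind => //; [exact: sub0 | move=> x y; exact: subD].
Qed.

Lemma two_neq0 : [pchar K] =i pred0 -> (2%:R : K) != 0.
Proof. by move=> h; move: (h 2%N); rewrite !inE /= => /negbT. Qed.

Lemma eq_opp0 : [pchar K] =i pred0 -> forall x : V, x = - x -> x = 0.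
Proof.
move=> h x /eqP; rewrite -subr_eq0 opprK -mulr2n -scaler_nat scaler_eq0.
by rewrite (negbTE (two_neq0 h)) /= => /eqP.
Qed.

Lemma upd_id n (f : 'I_n -> V) i : upd f i (f i) = f.
Proof. by apply: functional_extensionality => j; rewrite /upd; case: eqP => // ->. Qed.

Lemma sum_ext (I : eqType) (s u : seq I) (c : I -> V) :
  uniq s -> uniq u -> {subset s <= u} ->
  \sum_(i <- s) c i = \sum_(i <- u) (if i \in s then c i else 0).
Proof.
move=> us uu su; rewrite -big_mkcond -big_filter; apply: perm_big.
apply: uniq_perm => //; first exact: filter_uniq.
by move=> x; rewrite mem_filter; case xs: (x \in s) => //=; rewrite su.
Qed.

Lemma kl_sub (f g : V -> V) : klinear f -> klinear g -> klinear (fun x => f x - g x).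
Proof. by move=> hf hg k x y; rewrite hf hg scalerBr opprD addrACA. Qed.

Lemma kl_comp (f g : V -> V) : klinear f -> klinear g -> klinear (fun x => f (g x)).
Proof. by move=> hf hg k x y; rewrite hg hf. Qed.

Lemma kl_add (f g : V -> V) : klinear f -> klinear g -> klinear (fun x => f x + g x).
Proof. by move=> hf hg k x y; rewrite hf hg scalerDr addrACA. Qed.

Lemma kl_id : klinear (fun x : V => x).
Proof. by []. Qed.

End Basics.

Section Alg.
Variables (K : fieldType) (Gam : zmodType) (V : lmodType K) (n : nat).
Variables (G : Gam -> V -> Prop) (br : ('I_n -> V) -> V).
Variables (eps : Gam -> Gam -> K) (alpha : V -> V).
Hypothesis HL : nHomLieColor G br eps alpha.

Lemma HG : grading G. Proof. by case: HL. Qed.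
Lemma Halpha : deg0 G alpha. Proof. by case: HL => _ [_ []]. Qed.
Lemma Hlin f i : klinear (fun v => br (upd f i v)). Proof. by case: HL => _ [_ [_ [h _]]]. Qed.
Lemma Hskew (f : 'I_n -> V) (d : 'I_n -> Gam) (i j : 'I_n) :
  (forall k, G (d k) (f k)) -> nat_of_ord j = (nat_of_ord i).+1 ->
  br f = - (eps (d i) (d j) *: br (swapf f i j)).
Proof. by case: HL => _ [_ [_ [_ [_ [h _]]]]]; apply: h. Qed.
Lemma Gsub g : subspace (G g). Proof. by case: HG. Qed.

Lemma multilin_vanish (Phi : ('I_n -> V) -> V) (A B : 'I_n -> V -> Prop) :
  (forall f i, klinear (fun v => Phi (upd f i v))) ->
  (forall j x, A j x -> exists l : seq V, (forall v, v \in l -> B j v) /\ x = \sum_(v <- l) v) ->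
  (forall f, (forall j, B j (f j)) -> Phi f = 0) ->
  forall f, (forall j, A j (f j)) -> Phi f = 0.
Proof.
move=> hlin hdec hB.
suff h : forall m f, (forall j : 'I_n, (m <= j)%N -> B j (f j)) ->
    (forall j : 'I_n, (j < m)%N -> A j (f j)) -> Phi f = 0.
  move=> f hA; apply: (h n) => j hj; last exact: hA.
  by have := ltn_ord j; rewrite ltnNge hj.
elim=> [|m IH] f hBf hAf; first by apply: hB => j; apply: hBf.
case: (ltnP m n) => hm.
- set o := Ordinal hm.
  have [l [hl e]] := hdec o (f o) (hAf o (ltnSn m)).
  have E := klsum l (fun v => v) (hlin f o); simpl in E.
  rewrite -(upd_id f o) e E; apply: big1_seq => v /andP [_ hv]; apply: IH.
  + move=> j hj; rewrite /upd; case: eqP => [->|/eqP ne]; first exact: hl.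
    apply: hBf; rewrite ltn_neqAle hj andbT.
    apply: contra ne => /eqP h; apply/eqP/val_inj; by rewrite /= h.
  + move=> j hj; rewrite /upd; case: eqP => [e'|_]; first by rewrite e' /= ltnn in hj.
    by apply: hAf; apply: ltnW.
- apply: IH => j hj.
  + by have := ltn_ord j; rewrite ltnNge (leq_trans hm hj).
  + by apply: hAf; apply: leq_trans (ltn_ord j) (leq_trans hm (leqnSn m)).
Qed.

Lemma gsub_list (h : V -> Prop) : graded_subalgebra G br alpha h ->
  forall x, h x -> exists l : seq V, (forall v, v \in l -> h v /\ exists g, G g v) /\
    x = \sum_(v <- l) v.
Proof.
case=> _ [hd _] x hx; have [s [c [_ [hc e]]]] := hd x hx.
exists (map c s); split; last by rewrite e big_map.
by move=> v /mapP [g _ ->]; have [h1 h2] := hc g; split => //; exists g.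
Qed.

Lemma gradL (s : seq Gam) (w : Gam -> V) g : uniq s -> (forall h, G h (w h)) ->
  G g (\sum_(h <- s) w h) -> forall h, h \in s -> h != g -> w h = 0.
Proof.
move=> us hw hg h hs hne.
have [_ [_ huniq]] := HG.
pose w' := fun k => if k == g then - \sum_(k0 <- s | k0 != g) w k0 else w k.
have := huniq (g :: [seq k <- s | k != g]) w'.
have -> : w h = w' h by rewrite /w' (negbTE hne).
apply => //.
- by rewrite /= mem_filter eqxx /= filter_uniq.
- move=> k; rewrite /w'; case: eqP => [->|_]; last exact: hw.
  apply: subN; first exact: Gsub.
  rewrite (bigID (pred1 g)) /= in hg.
  set Y := (\sum_(i <- s | i == g) w i) in hg.
  set Z := (\sum_(i <- s | i != g) w i) in hg *.
  have -> : Z = (Y + Z) - Y by rewrite [Y + Z]addrC addrK.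
  apply: subB => //; first exact: Gsub.
  by apply: subsum; [exact: Gsub | move=> k0 /eqP ->].
- rewrite big_cons /w' eqxx.
  rewrite (eq_big_seq w); last by move=> k; rewrite mem_filter => /andP [/negbTE -> _].
  by rewrite big_filter addNr.
- by rewrite inE mem_filter hne hs orbT.
Qed.



Lemma eig_comp (P : V -> V) (k : K) : deg0 G P -> forall x, P x = k *: x ->
  exists (s : seq Gam) (c : Gam -> V), uniq s /\ (forall g, G g (c g) /\ P (c g) = k *: c g) /\
    x = \sum_(g <- s) c g.
Proof.
move=> [hl hd] x hx; have [_ [hdec huniq]] := HG.
have [s [c [us [hc e]]]] := hdec x.
have hz : forall g, g \in s -> P (c g) - k *: c g = 0.
  apply: (huniq s (fun g => P (c g) - k *: c g)) => //.
  - move=> g; apply: subB; [exact: Gsub | exact: hd | apply: subZ; [exact: Gsub | exact: hc]].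
  - by rewrite sumrB -klsum // -scaler_sumr -e hx subrr.
exists s, (fun g => if g \in s then c g else 0); split => //; split.
- move=> g; case: ifP => hg.
  + split; first exact: hc.
    by apply/eqP; rewrite -subr_eq0; apply/eqP; exact: hz.
  + by split; [exact: (sub0 (Gsub g)) | rewrite kl0 // scaler0].
- by rewrite e; apply: eq_big_seq => g hg; rewrite hg.
Qed.

Lemma eig_gsub (P : V -> V) k : (0 < n)%N -> centroid G br alpha P ->
  graded_subalgebra G br alpha (fun x => P x = k *: x).
Proof.
move=> hn0 [[hl hd] [hpa hbr]]; split; [|split; [|split]].
- split; first by rewrite kl0 // scaler0.
  split; first by move=> x y hx hy; rewrite klD // hx hy scalerDr.
  by move=> a x hx; rewrite klZ // hx !scalerA mulrC.
- move=> x hx; have [s [c [us [hc e]]]] := eig_comp (conj hl hd) hx.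
  by exists s, c.
- by move=> x hx; rewrite hpa hx klZ //; case: Halpha.
- move=> f hf; rewrite (hbr f (Ordinal hn0)) // hf.
  have E := klZ k (f (Ordinal hn0)) (Hlin f (Ordinal hn0)); simpl in E.
  by rewrite E upd_id.
Qed.
Lemma Pslot (P : V -> V) : centroid G br alpha P ->
  forall k (hk : (k < n)%N) f d, (forall j, G (d j) (f j)) ->
  P (br f) = br (upd f (Ordinal hk) (P (f (Ordinal hk)))).
Proof.
move=> [[hl hd] [_ hbr]]; elim=> [|k IH] hk f d hf; first by apply: hbr.
set i := Ordinal (ltnW hk); set j := Ordinal hk.
have ij : (i == j) = false by apply/eqP => /(congr1 val) /= /n_Sn.
have ji : (j == i) = false by rewrite eq_sym.
pose dsw := fun m => if m == i then d j else if m == j then d i else d m.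
have hsw : forall m, G (dsw m) (swapf f i j m).
  by move=> m; rewrite /dsw /swapf; case: ifP => _; [|case: ifP => _]; exact: hf.
rewrite (Hskew (i:=i) (j:=j) hf) // klN // klZ // (IH (ltnW hk) _ dsw hsw).
pose g := upd f j (P (f j)).
have hg : forall m, G (d m) (g m).
  by move=> m; rewrite /g /upd; case: eqP => [->|_]; [apply: hd|]; exact: hf.
rewrite -/i (Hskew (i:=i) (j:=j) hg) //.
congr (- (_ *: br _)); apply: functional_extensionality => m.
rewrite /swapf /g /upd !eqxx ij.
by case: (m == i) => //; case: (m == j).
Qed.

Lemma fwd_mixed_hom (P : V -> V) (i : nat) : [pchar K] =i pred0 -> centroid G br alpha P ->
  (1 <= i <= n.-1)%N -> forall f d, (forall j, G (d j) (f j)) ->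
  (forall j : 'I_n, (j < i)%N -> P (f j) = 1 *: f j) ->
  (forall j : 'I_n, (i <= j)%N -> P (f j) = -1 *: f j) -> br f = 0.
Proof.
move=> hch hc /andP [h1 h2] f d hf hp hm.
have hn0 : (0 < n)%N by apply: leq_trans h1 (leq_trans h2 (leq_pred n)).
have hnl : (n.-1 < n)%N by rewrite prednK // leqnn.
have e1 := Pslot hc hn0 hf; rewrite hp // scale1r upd_id in e1.
have e2 := Pslot hc hnl hf; rewrite hm // in e2.
have E := klZ (-1) (f (Ordinal hnl)) (Hlin f (Ordinal hnl)); simpl in E.
rewrite E upd_id scaleN1r e1 in e2.
exact: eq_opp0 hch _ e2.
Qed.

Lemma cid_deg (f : 'I_n -> V) : (forall j, exists g, G g (f j)) ->
  exists d : 'I_n -> Gam, forall j, G (d j) (f j).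
Proof.
move=> h; exists (fun j => proj1_sig (constructive_indefinite_description _ (h j))).
by move=> j; case: (constructive_indefinite_description _ (h j)).
Qed.

Lemma fwd_mixed (P : V -> V) (i : nat) : [pchar K] =i pred0 -> centroid G br alpha P ->
  (1 <= i <= n.-1)%N -> forall f : 'I_n -> V,
  (forall j : 'I_n, (j < i)%N -> P (f j) = 1 *: f j) ->
  (forall j : 'I_n, (i <= j)%N -> P (f j) = -1 *: f j) -> br f = 0.
Proof.
move=> hch hc hi f hp hm.
have hn0 : (0 < n)%N.
  by case/andP: hi => h1 h2; apply: leq_trans h1 (leq_trans h2 (leq_pred n)).
pose A := fun (j : 'I_n) x => P x = (if (j < i)%N then 1 else -1) *: x.
apply: (multilin_vanish (A := A) (B := fun j x => A j x /\ exists g, G g x)).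
- exact: Hlin.
- move=> j x hx; apply: gsub_list; last exact: hx.
  exact: eig_gsub.
- move=> g hB; have [d hd] := cid_deg (fun j => proj2 (hB j)).
  apply: (fwd_mixed_hom hch hc hi hd).
  + by move=> j hj; have [+ _] := hB j; rewrite /A hj.
  + by move=> j hj; have [+ _] := hB j; rewrite /A ltnNge hj.
- move=> j; rewrite /A; case: ifP => hj; [exact: hp | apply: hm; by rewrite leqNgt hj].
Qed.
Lemma sort_hom (gp gm : V -> Prop) :
  (forall i : nat, (1 <= i <= n.-1)%N -> forall f : 'I_n -> V,
     (forall j : 'I_n, (j < i)%N -> gp (f j)) ->
     (forall j : 'I_n, (i <= j)%N -> gm (f j)) -> br f = 0) ->
  forall N (s : 'I_n -> bool) f d, (\sum_(k < n) s k * k < N)%N ->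
  (forall j, G (d j) (f j)) -> (forall j, if s j then gp (f j) else gm (f j)) ->
  (exists j, s j = false) -> (exists k, s k = true) -> br f = 0.
Proof.
move=> hmix; elim=> [|N IH] s f d hmu hf hs [j0 hj0] [k0 hk0]; first by [].
case: (boolP [exists j : 'I_n, [exists j' : 'I_n,
   (nat_of_ord j' == (nat_of_ord j).+1) && ~~ s j && s j']]).
- case/existsP => j /existsP [j' /andP [/andP [/eqP hjj' hsj] hsj']].
  have ne : (j' == j) = false.
    by apply/eqP => e; move: hjj'; rewrite e => /n_Sn.
  have ne' : (j == j') = false by rewrite eq_sym.
  pose s' := fun m => if m == j then s j' else if m == j' then s j else s m.
  pose d' := fun m => if m == j then d j' else if m == j' then d j else d m.
  rewrite (Hskew (i:=j) (j:=j') hf hjj').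
  suff -> : br (swapf f j j') = 0 by rewrite scaler0 oppr0.
  apply: (IH s' _ d').
  + have Hmu : (\sum_(k < n) s k * k = (\sum_(k < n) s' k * k).+1)%N.
      rewrite (bigD1 j) //= (bigD1 j') /=; last by rewrite ne.
      rewrite [in RHS](bigD1 j) //= [in RHS](bigD1 j') /=; last by rewrite ne.
      rewrite /s' !eqxx ne (negbTE hsj) hsj' /= !mul1n !mul0n !add0n hjj'.
      rewrite addSn; congr (_.+1); congr (_ + _)%N.
      by apply: eq_bigr => k /andP [/negbTE -> /negbTE ->].
    by rewrite Hmu ltnS in hmu.
  + by move=> m; rewrite /d' /swapf; case: (m == j); [|case: (m == j')]; apply: hf.
  + by move=> m; rewrite /s' /swapf; case: (m == j); [|case: (m == j')]; apply: hs.
  + by exists j'; rewrite /s' ne eqxx (negbTE hsj).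
  + by exists j; rewrite /s' eqxx.
- move/existsPn => hno.
  have hmono : forall j j' : 'I_n, nat_of_ord j' = (nat_of_ord j).+1 -> s j' -> s j.
    move=> j j' e hj'; apply/negPn/negP => hj.
    by have := existsPn (hno j) j'; rewrite e eqxx hj hj'.
  have hP0 : ~~ s j0 by rewrite hj0.
  case: (@arg_minnP _ j0 (fun k => ~~ s k) (fun k : 'I_n => nat_of_ord k) hP0) => m hm hmin.
  have hlow : forall k : 'I_n, (k < m)%N -> s k.
    move=> k hk; apply/negPn/negP => hk'.
    by have := hmin k hk'; rewrite leqNgt hk.
  have hhigh : forall t (k : 'I_n), nat_of_ord k = (m + t)%N -> s k = false.
    elim=> [|t IHt] k e.
      have -> : k = m by apply: val_inj; rewrite /= e addn0.
      exact: negbTE hm.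
    have hk' : (m + t < n)%N by apply: leq_trans (ltn_ord k); rewrite e addnS.
    apply/negbTE/negP => hk.
    have := IHt (Ordinal hk') erefl.
    by rewrite (hmono (Ordinal hk') k) //= e addnS.
  apply: (hmix m).
  + apply/andP; split.
      rewrite lt0n; apply/negP => /eqP m0.
      by have := hhigh k0 k0; rewrite m0 add0n hk0 => /(_ erefl).
    by rewrite -ltnS prednK ?ltn_ord //; apply: leq_ltn_trans (ltn_ord m).
  + by move=> j hj; have := hs j; rewrite hlow.
  + move=> j hj; have := hs j; rewrite (hhigh (j - m)%N j) //.
    by rewrite subnKC.
Qed.

Lemma bwd_mixed (gp gm : V -> Prop) :
  graded_subalgebra G br alpha gp -> graded_subalgebra G br alpha gm ->
  (forall i : nat, (1 <= i <= n.-1)%N -> forall f : 'I_n -> V,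
     (forall j : 'I_n, (j < i)%N -> gp (f j)) ->
     (forall j : 'I_n, (i <= j)%N -> gm (f j)) -> br f = 0) ->
  forall (s : 'I_n -> bool) f, (forall j, if s j then gp (f j) else gm (f j)) ->
  (exists j, s j = false) -> (exists k, s k = true) -> br f = 0.
Proof.
move=> hp hm hmix s f hs h1 h2.
pose A := fun j x => if s j then gp x else gm x.
apply: (multilin_vanish (A := A) (B := fun j x => A j x /\ exists g, G g x)) (hs).
- exact: Hlin.
- move=> j x; rewrite /A; case: (s j) => hx; apply: gsub_list; eauto.
- move=> g hB; have [d hd] := cid_deg (fun j => proj2 (hB j)).
  apply: (sort_hom hmix (N := (\sum_(k < n) s k * k).+1) _ hd) => //.
  by move=> j; have [] := hB j.
Qed.
Lemma br0slot (f : 'I_n -> V) j : f j = 0 -> br f = 0.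
Proof. by move=> e; rewrite -(upd_id f j) e; apply: (kl0 (Hlin f j)). Qed.

Section Bwd.
Variables (gp gm : V -> Prop).
Hypothesis hch : [pchar K] =i pred0.
Hypothesis hn0 : (0 < n)%N.
Hypothesis hnzp : exists x, gp x /\ x != 0.
Hypothesis hnzm : exists x, gm x /\ x != 0.
Hypothesis hp : graded_subalgebra G br alpha gp.
Hypothesis hm : graded_subalgebra G br alpha gm.
Hypothesis hdec : forall x, exists a b, gp a /\ gm b /\ x = a + b.
Hypothesis hint : forall x, gp x -> gm x -> x = 0.
Hypothesis hmix : forall i : nat, (1 <= i <= n.-1)%N -> forall f : 'I_n -> V,
     (forall j : 'I_n, (j < i)%N -> gp (f j)) ->
     (forall j : 'I_n, (i <= j)%N -> gm (f j)) -> br f = 0.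

Lemma hpS : subspace gp. Proof. by case: hp. Qed.
Lemma hmS : subspace gm. Proof. by case: hm. Qed.

Lemma hdec' x : exists a, gp a /\ gm (x - a).
Proof. by have [a [b [ha [hb ->]]]] := hdec x; exists a; rewrite [a + b]addrC addrK. Qed.

Definition pa x := proj1_sig (constructive_indefinite_description _ (hdec' x)).
Lemma hpa x : gp (pa x) /\ gm (x - pa x).
Proof. by rewrite /pa; case: (constructive_indefinite_description _ (hdec' x)). Qed.

Lemma huq x a : gp a -> gm (x - a) -> pa x = a.
Proof.
move=> ha hb; apply/eqP; rewrite -subr_eq0; apply/eqP; apply: hint.
  by apply: subB hpS (hpa x).1 ha.
have -> : pa x - a = (x - a) - (x - pa x).
  by symmetry; rewrite opprB addrC addrA subrK.
by apply: subB hmS hb (hpa x).2.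
Qed.

Lemma pa_lin : klinear pa.
Proof.
move=> k x y; apply: huq.
  by apply: subD hpS _ (hpa y).1; apply: subZ hpS (hpa x).1.
rewrite opprD addrACA -scalerBr.
by apply: subD hmS _ (hpa y).2; apply: subZ hmS (hpa x).2.
Qed.

Lemma pa_p a : gp a -> pa a = a.
Proof. by move=> ha; apply: huq => //; rewrite subrr; apply: sub0 hmS. Qed.
Lemma pa_m b : gm b -> pa b = 0.
Proof. by move=> hb; apply: huq; [apply: sub0 hpS | rewrite subr0]. Qed.

Definition Pm x := pa x - (x - pa x).

Lemma Pm_lin : klinear Pm.
Proof. exact: (kl_sub pa_lin (kl_sub (@kl_id _ V) pa_lin)). Qed.

Lemma eP x : Pm x - pa x = - (x - pa x).
Proof. by rewrite /Pm addrC addKr. Qed.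

Lemma pa_Pm x : pa (Pm x) = pa x.
Proof. by apply: huq; [exact: (hpa x).1 | rewrite eP; apply: subN hmS (hpa x).2]. Qed.

Lemma Pm_Pm x : Pm (Pm x) = x.
Proof. by rewrite {1}/Pm pa_Pm eP opprK addrC subrK. Qed.

Lemma G_pa g x : G g x -> G g (pa x).
Proof.
move=> hx.
have [s [c [us [hc ea]]]] := (proj1 (proj2 hp)) (pa x) (hpa x).1.
have [t [e [ut [he eb]]]] := (proj1 (proj2 hm)) (x - pa x) (hpa x).2.
pose u := undup (s ++ t).
pose c' h := if h \in s then c h else 0.
pose e' h := if h \in t then e h else 0.
have Ea : pa x = \sum_(h <- u) c' h.
  by rewrite ea (@sum_ext _ _ _ s u c us (undup_uniq _)) // => h hh; rewrite mem_undup mem_cat hh.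
have Eb : x - pa x = \sum_(h <- u) e' h.
  by rewrite eb (@sum_ext _ _ _ t u e ut (undup_uniq _)) // => h hh; rewrite mem_undup mem_cat hh orbT.
have Ex : x = \sum_(h <- u) (c' h + e' h) by rewrite big_split /= -Ea -Eb addrC subrK.
have hc1 : forall h, G h (c' h) /\ gp (c' h).
  move=> h; rewrite /c'; case: ifP => _; first exact: hc.
  by split; [apply: sub0 (Gsub h) | apply: sub0 hpS].
have he1 : forall h, G h (e' h) /\ gm (e' h).
  move=> h; rewrite /e'; case: ifP => _; first exact: he.
  by split; [apply: sub0 (Gsub h) | apply: sub0 hmS].
have hG' : forall h, G h (c' h + e' h).
  by move=> h; apply: subD (Gsub h) (hc1 h).1 (he1 h).1.
have z := gradL (undup_uniq _) hG' (eq_ind _ _ hx _ Ex).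
have cz : forall h, h \in u -> h != g -> c' h = 0.
  move=> h hu hne; have := z h hu hne => /eqP; rewrite addr_eq0 => /eqP ce.
  apply: hint; first exact: (hc1 h).2.
  by rewrite ce; apply: subN hmS (he1 h).2.
rewrite Ea (bigID (pred1 g)) /= [X in _ + X]big1_seq ?addr0.
  refine (@subsum _ _ (G g) _ u _ _ (Gsub g) _).
  by move=> h /eqP ->; exact: (hc1 g).1.
by move=> h /andP [hne hu]; apply: cz.
Qed.


Lemma split_br f : br f = br (fun j => pa (f j)) + br (fun j => f j - pa (f j)).
Proof.
apply/eqP; rewrite -subr_eq0; apply/eqP.
pose Phi g := br g - (br (fun j => pa (g j)) + br (fun j => g j - pa (g j))).
change (Phi f = 0).
apply: (multilin_vanish (A := fun _ _ => True) (B := fun _ x => gp x \/ gm x)) => //.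
- move=> g i.
  have -> : (fun v => Phi (upd g i v)) = (fun v => br (upd g i v) -
      (br (upd (fun j => pa (g j)) i (pa v)) +
       br (upd (fun j => g j - pa (g j)) i (v - pa v)))).
    apply: functional_extensionality => v; rewrite /Phi.
    by congr (_ - (br _ + br _)); apply: functional_extensionality => j;
      rewrite /upd; case: ifP.
  exact: (kl_sub (Hlin g i) (kl_add (kl_comp (Hlin _ i) pa_lin)
     (kl_comp (Hlin _ i) (kl_sub (@kl_id _ V) pa_lin)))).
- move=> j x _; exists [:: pa x; x - pa x]; split.
  + move=> v; rewrite !inE => /orP [/eqP ->|/eqP ->].
      by left; exact: (hpa x).1.
    by right; exact: (hpa x).2.
  + by rewrite big_cons big_cons big_nil addr0 addrC subrK.
- move=> g hg.
  pose s j := if excluded_middle_informative (gp (g j)) then true else false.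
  have hs : forall j, if s j then gp (g j) else gm (g j).
    by move=> j; rewrite /s; case: excluded_middle_informative => // h; case: (hg j).
  rewrite /Phi.
  case: (boolP [exists j, ~~ s j]) => [/existsP [j hj] | /existsPn hall].
  + have gj : gm (g j) by have := hs j; rewrite (negbTE hj).
    rewrite (@br0slot (fun j => pa (g j)) j) /=; last exact: pa_m.
    case: (boolP [exists k, s k]) => [/existsP [k hk] | /existsPn hnone].
    * have gk : gp (g k) by have := hs k; rewrite hk.
      rewrite (@br0slot (fun j => g j - pa (g j)) k) /=; last by rewrite pa_p // subrr.
      rewrite (bwd_mixed hp hm hmix hs); last by exists k.
        by rewrite addr0 subrr.
      by exists j; apply: negbTE.
    * have -> : (fun j => g j - pa (g j)) = g.
        apply: functional_extensionality => k; have := hs k.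
        by rewrite (negbTE (hnone k)) => hk; rewrite pa_m // subr0.
      by rewrite add0r subrr.
  + have -> : (fun j => pa (g j)) = g.
      apply: functional_extensionality => k; have := hs k.
      by rewrite (negbNE (hall k)) => hk; rewrite pa_p.
    rewrite (@br0slot (fun j => g j - pa (g j)) (Ordinal hn0)) /=.
      by rewrite addr0 subrr.
    by have := hs (Ordinal hn0); rewrite (negbNE (hall _)) => hk; rewrite pa_p // subrr.
Qed.

Lemma Pm_br f i0 : Pm (br f) = br (upd f i0 (Pm (f i0))).
Proof.
set A := br (fun j => pa (f j)); set B := br (fun j => f j - pa (f j)).
have hA : gp A by apply: (proj2 (proj2 (proj2 hp))) => j; exact: (hpa (f j)).1.
have hB : gm B by apply: (proj2 (proj2 (proj2 hm))) => j; exact: (hpa (f j)).2.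
have hsplit := split_br f; rewrite -/A -/B in hsplit.
have e1 : pa (br f) = A by apply: huq => //; rewrite hsplit [A + B]addrC addrK.
have -> : Pm (br f) = A - B by rewrite /Pm e1 hsplit [A + B]addrC addrK.
rewrite split_br.
have -> : (fun j => pa (upd f i0 (Pm (f i0)) j)) = (fun j => pa (f j)).
  apply: functional_extensionality => j; rewrite /upd; case: eqP => [e|//].
  by rewrite e pa_Pm.
have -> : (fun j => upd f i0 (Pm (f i0)) j - pa (upd f i0 (Pm (f i0)) j)) =
    upd (fun j => f j - pa (f j)) i0 (- (f i0 - pa (f i0))).
  apply: functional_extensionality => j; rewrite /upd; case: ifP => // _.
  by rewrite pa_Pm eP.
pose F := fun j => f j - pa (f j).
have E : br (upd F i0 (- (f i0 - pa (f i0)))) = - br (upd F i0 (f i0 - pa (f i0))) :=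
  klN (f i0 - pa (f i0)) (Hlin F i0).
have E2 : upd F i0 (f i0 - pa (f i0)) = F := upd_id F i0.
by rewrite E E2.
Qed.

Lemma bwd_strict : exists P, strict_product G br alpha P.
Proof.
have hd0 : deg0 G Pm.
  split; first exact: Pm_lin.
  move=> g x hx; apply: subB (Gsub g) (G_pa hx) _.
  by apply: subB (Gsub g) hx (G_pa hx).
exists Pm; split; [split; [exact: hd0|split; [|split]]|split; [exact: hd0|split]].
- move=> h; have [x [hx nz]] := hnzm; have := h x.
  rewrite /Pm pa_m // sub0r subr0 => e.
  by move/negP: nz; apply; apply/eqP; apply: eq_opp0 hch _ (esym e).
- move=> h; have [x [hx nz]] := hnzp; have := h x.
  rewrite /Pm pa_p // subrr subr0 => e.
  by move/negP: nz; apply; apply/eqP; apply: eq_opp0 hch _ e.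
- exact: Pm_Pm.
- move=> x.
  have hal : klinear alpha by case: Halpha.
  have ea : pa (alpha x) = alpha (pa x).
    apply: huq; first exact: (proj1 (proj2 (proj2 hp))) _ (hpa x).1.
    by rewrite -(klB _ _ hal); exact: (proj1 (proj2 (proj2 hm))) _ (hpa x).2.
  by rewrite /Pm ea !(klB _ _ hal).
- by move=> f i0 _; exact: Pm_br.
Qed.

End Bwd.
End Alg.

Theorem proposition6p11 (K : fieldType) (charK : [pchar K] =i pred0)
  (Gam : zmodType) (V : lmodType K) (n : nat) (hn : (2 <= n)%N)
  (G : Gam -> V -> Prop) (br : ('I_n -> V) -> V)
  (eps : Gam -> Gam -> K) (alpha : V -> V) :
  nHomLieColor G br eps alpha ->
  ((exists P : V -> V, strict_product G br alpha P) <->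
   (exists gp gm : V -> Prop,
      graded_subalgebra G br alpha gp /\ graded_subalgebra G br alpha gm /\
      (exists x, gp x /\ x != 0) /\ (exists x, gm x /\ x != 0) /\
      (forall x, exists a b, gp a /\ gm b /\ x = a + b) /\
      (forall x, gp x -> gm x -> x = 0) /\
      (forall i : nat, (1 <= i <= n.-1)%N ->
         forall f : 'I_n -> V,
           (forall j : 'I_n, (j < i)%N -> gp (f j)) ->
           (forall j : 'I_n, (i <= j)%N -> gm (f j)) ->
           br f = 0))).
Proof.
move=> HL.
have hn0 : (0 < n)%N by apply: ltnW.
split.
- move=> [P [hap hc]].
  have [[hl hd] [nid [nopp hinv]]] := hap.
  have h2 : (2%:R : K) != 0 := two_neq0 charK.
  exists (fun x => P x = 1 *: x), (fun x => P x = -1 *: x).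
  split; first exact: (eig_gsub HL).
  split; first exact: (eig_gsub HL).
  split.
    have [x hx] := not_all_ex_not _ _ nopp.
    exists (x + P x); split.
      by rewrite klD // hinv scale1r addrC.
    apply/eqP => e; apply: hx; apply/eqP; by rewrite -addr_eq0 addrC e.
  split.
    have [x hx] := not_all_ex_not _ _ nid.
    exists (x - P x); split.
      by rewrite klB // hinv scaleN1r opprB.
    apply/eqP => e; apply: hx; apply/eqP; by rewrite eq_sym -subr_eq0 e.
  split.
    move=> x; exists (2%:R^-1 *: (x + P x)), (2%:R^-1 *: (x - P x)).
    split; first by rewrite klZ // klD // hinv scale1r addrC.
    split; first by rewrite klZ // klB // hinv scalerA mulrC -scalerA scaleN1r opprB.
    rewrite -scalerDr addrACA subrr addr0 -mulr2n -scaler_nat scalerA mulVf //.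
    by rewrite scale1r.
  split.
    move=> x h1 h2'; apply: (eq_opp0 charK).
    by rewrite -scaleN1r -h2' h1 scale1r.
  move=> i hi f hfp hfm; exact: (fwd_mixed HL charK hc hi hfp hfm).
- move=> [gp [gm [hp [hm [hnzp [hnzm [hdec [hint hmix]]]]]]]].
  exact: (bwd_strict HL charK hn0 hnzp hnzm hp hm hdec hint hmix).
Qed.
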